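(* Let $\mathcal M_1=((X_1,\mathcal N_1),\mathcal I,V_1)$ and $\mathcal M_2=((X_2,\mathcal N_2),\mathcal I,V_2)$ be neighbourhood models over the same index space and $(Z_{\mathcal N},Z_1,Z_2)$ a path preserving bisimulation between them. If $x_1\,Z_{\mathcal N}\,x_2$, then for every SLCS formula $\varphi$: $\mathcal M_1,x_1\models\varphi$ if and only if $\mathcal M_2,x_2\models\varphi$.
   Context: A filter on a set $X$ is a family $F\subseteq\mathcal P(X)$ closed under finite intersections and supersets, with $\emptyset\notin F$. A neighbourhood space $(X,\mathcal N)$ assigns to each $x\in X$ a filter $\mathcal N(x)$ on $X$ such that $x\in N$ for all $N\in\mathcal N(x)$; elements of $\mathcal N(x)$ are neighbourhoods of $x$. The closure of $A\subseteq X$ is $\mathcal C(A)=\{x\in X\mid \forall N\in\mathcal N(x): A\cap N\neq\emptyset\}$. Subsets $U,V$ are semi-separated if $\mathcal C(U)\cap V=U\cap\mathcal C(V)=\emptyset$; a set is connected if it is not the union of two non-empty semi-separated sets. A function $f:X_1\to X_2$ between neighbourhood spaces is continuous if for every $x\in X_1$ and every $N_2\in\mathcal N_2(f(x))$ we have $f^{-1}[N_2]\in\mathcal N_1(x)$. An index space $\mathcal I=(I,\mathcal N_I,\le,0)$ is a connected neighbourhood space $(I,\mathcal N_I)$ with a linear order $\le$ whose least element is $0$. A path on a neighbourhood space $X$ is a continuous map $p:I\to X$; we write $p:x\rightsquigarrow\infty$ if $p(0)=x$. A neighbourhood model $\mathcal M=((X,\mathcal N),\mathcal I,V)$ consists of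 a neighbourhood space, an index space and a valuation $V:X\to\mathcal P(\mathsf{P})$ for a fixed countable set $\mathsf P$ of propositional atoms; paths on $\mathcal M$ are paths with respect to $\mathcal I$. SLCS formulas: $\varphi::=a\mid\top\mid\neg\varphi\mid\varphi\wedge\varphi\mid\mathcal N\varphi\mid\varphi\,\mathcal R\,\varphi\mid\varphi\,\mathcal P\,\varphi$ with $a\in\mathsf P$. Semantics: $\mathcal M,x\models a$ iff $a\in V(x)$; Booleans as usual; $\mathcal M,x\models\mathcal N\varphi$ iff $x\in\mathcal C(\{y\mid\mathcal M,y\models\varphi\})$; $\mathcal M,x\models\varphi\,\mathcal R\,\psi$ iff there are a path $p$ and $n\in I$ with $p(n)=x$, $\mathcal M,p(0)\models\psi$ and $\mathcal M,p(i)\models\varphi$ for all $0<i\le n$; $\mathcal M,x\models\varphi\,\mathcal P\,\psi$ iff there are a path $p$ with $p(0)=x$ and $n\in I$ with $\mathcal M,p(n)\models\psi$ and $\mathcal M,p(i)\models\varphi$ for all $0\le i<n$. A relation $Z\subseteq X_1\times X_2$ between neighbourhood models satisfies the neighbourhood bisimulation conditions at a pair $x_1\,Z\,x_2$ if: (atomic) $V_1(x_1)=V_2(x_2)$; (forth) for every $N_2\in\mathcal N_2(x_2)$ there is $N_1\in\mathcal N_1(x_1)$ such that every $y_1\in N_1$ has some $y_2\in N_2$ with $y_1Zy_2$; (back) for every $N_1\in\mathcal N_1(x_1)$ there is $N_2\in\mathcal N_2(x_2)$ such that every $y_2\in N_2$ has some $y_1\in N_1$ with $y_1Zy_2$. $Z$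 is a neighbourhood bisimulation if these hold at every related pair. Path preserving bisimulation: let $\mathcal M_1,\mathcal M_2$ be neighbourhood models over the same index space $\mathcal I$, with $\mathcal P_1,\mathcal P_2$ their sets of paths. A triple $(Z_{\mathcal N},Z_1,Z_2)$ with $\emptyset\neq Z_{\mathcal N}\subseteq X_1\times X_2$, $Z_1\subseteq(\mathcal P_1\times I)\times(\mathcal P_2\times I)$, $Z_2\subseteq(\mathcal P_2\times I)\times(\mathcal P_1\times I)$ is a path preserving bisimulation if for all $x_1,x_2$, paths $p,q$ and indices: (1) $Z_{\mathcal N}$ is a neighbourhood bisimulation; (2) if $x_1Z_{\mathcal N}x_2$, $p:x_1\rightsquigarrow\infty$, $n\neq0$, then there are $q:x_2\rightsquigarrow\infty$ and $m$ with $p(n)Z_{\mathcal N}q(m)$ and $(p,n)Z_1(q,m)$; (3) if $x_1Z_{\mathcal N}x_2$, $p$ a path with $p(n)=x_1$, $n\neq0$, then there are a path $q$ and $m$ with $q(m)=x_2$, $p(0)Z_{\mathcal N}q(0)$ and $(p,n)Z_1(q,m)$; (4) if $(p,n)Z_1(q,m)$ and $0<k_q<m$, then there is $k_p$ with $0<k_p<n$ and $p(k_p)Z_{\mathcal N}q(k_q)$; (5) if $x_1Z_{\mathcal N}x_2$, $q:x_2\rightsquigarrow\infty$, $m\neq0$, then there are $p:x_1\rightsquigarrow\infty$ and $n$ with $p(n)Z_{\mathcal N}q(m)$ and $(q,m)Z_2(p,n)$; (6) if $x_1Z_{\mathcal N}x_2$, $q$ a path with $q(m)=x_2$, $m\neq0$,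 then there are a path $p$ and $n$ with $p(n)=x_1$, $p(0)Z_{\mathcal N}q(0)$ and $(q,m)Z_2(p,n)$; (7) if $(q,m)Z_2(p,n)$ and $0<k_p<n$, then there is $k_q$ with $0<k_q<m$ and $p(k_p)Z_{\mathcal N}q(k_q)$. *)

(* Defs.v *)
Set Implicit Arguments.

Section Nbhd.
Variable X : Type.

Definition is_filter (F : (X -> Prop) -> Prop) : Prop :=
  F (fun _ => True) /\
  (forall A B, F A -> F B -> F (fun x => A x /\ B x)) /\
  (forall A B, F A -> (forall x, A x -> B x) -> F B) /\
  ~ F (fun _ => False).

Definition nbhd_space (N : X -> (X -> Prop) -> Prop) : Prop :=
  forall x, is_filter (N x) /\ (forall A, N x A -> A x).

Definition closure (N : X -> (X -> Prop) -> Prop) (A : X -> Prop) : X -> Prop :=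
  fun x => forall M, N x M -> exists y, A y /\ M y.

Definition semi_separated (N : X -> (X -> Prop) -> Prop) (U W : X -> Prop) : Prop :=
  (forall x, ~ (closure N U x /\ W x)) /\ (forall x, ~ (U x /\ closure N W x)).

Definition connected (N : X -> (X -> Prop) -> Prop) (A : X -> Prop) : Prop :=
  ~ exists U W : X -> Prop,
      (forall x, A x <-> (U x \/ W x)) /\
      (exists u, U u) /\ (exists w, W w) /\ semi_separated N U W.
End Nbhd.

Definition continuous {X1 X2 : Type} (N1 : X1 -> (X1 -> Prop) -> Prop)
  (N2 : X2 -> (X2 -> Prop) -> Prop) (f : X1 -> X2) : Prop :=
  forall x M2, N2 (f x) M2 -> N1 x (fun y => M2 (f y)).

Definition index_space {I : Type} (NI : I -> (I -> Prop) -> Prop)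
  (le : I -> I -> Prop) (i0 : I) : Prop :=
  nbhd_space NI /\ connected NI (fun _ => True) /\
  (forall i, le i i) /\
  (forall i j, le i j -> le j i -> i = j) /\
  (forall i j k, le i j -> le j k -> le i k) /\
  (forall i j, le i j \/ le j i) /\
  (forall i, le i0 i).

Inductive form : Type :=
| FAtom : nat -> form
| FTop : form
| FNot : form -> form
| FAnd : form -> form -> form
| FNear : form -> form
| FReach : form -> form -> form
| FPass : form -> form -> form.

Section Sem.
Variables (X I : Type) (N : X -> (X -> Prop) -> Prop)
  (NI : I -> (I -> Prop) -> Prop) (le : I -> I -> Prop) (i0 : I)
  (V : X -> nat -> Prop).

Definition lt (i j : I) : Prop := le i j /\ i <> j.

Definition is_path (p : I -> X) : Prop := continuous NI N p.

Fixpoint sat (phi : form) (x : X) : Prop :=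
  match phi with
  | FAtom a => V x a
  | FTop => True
  | FNot f => ~ sat f x
  | FAnd f g => sat f x /\ sat g x
  | FNear f => closure N (sat f) x
  | FReach f g => exists p n, is_path p /\ p n = x /\ sat g (p i0) /\
                   (forall i, lt i0 i -> le i n -> sat f (p i))
  | FPass f g => exists p n, is_path p /\ p i0 = x /\ sat g (p n) /\
                   (forall i, le i0 i -> lt i n -> sat f (p i))
  end.
End Sem.

Definition nbhd_bisim_at {X1 X2 : Type} (N1 : X1 -> (X1 -> Prop) -> Prop)
  (N2 : X2 -> (X2 -> Prop) -> Prop) (V1 : X1 -> nat -> Prop) (V2 : X2 -> nat -> Prop)
  (Z : X1 -> X2 -> Prop) (x1 : X1) (x2 : X2) : Prop :=
  (forall a, V1 x1 a <-> V2 x2 a) /\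
  (forall M2, N2 x2 M2 -> exists M1, N1 x1 M1 /\
      forall y1, M1 y1 -> exists y2, M2 y2 /\ Z y1 y2) /\
  (forall M1, N1 x1 M1 -> exists M2, N2 x2 M2 /\
      forall y2, M2 y2 -> exists y1, M1 y1 /\ Z y1 y2).

Definition nbhd_bisim {X1 X2 : Type} (N1 : X1 -> (X1 -> Prop) -> Prop)
  (N2 : X2 -> (X2 -> Prop) -> Prop) (V1 : X1 -> nat -> Prop) (V2 : X2 -> nat -> Prop)
  (Z : X1 -> X2 -> Prop) : Prop :=
  forall x1 x2, Z x1 x2 -> nbhd_bisim_at N1 N2 V1 V2 Z x1 x2.

(* Path preserving bisimulation (Z_N, Z1, Z2). Z1 p n q m encodes (p,n) Z1 (q,m),
   Z2 q m p n encodes (q,m) Z2 (p,n); they relate paths only. *)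
Definition path_pres_bisim {X1 X2 I : Type}
  (N1 : X1 -> (X1 -> Prop) -> Prop) (N2 : X2 -> (X2 -> Prop) -> Prop)
  (NI : I -> (I -> Prop) -> Prop) (le : I -> I -> Prop) (i0 : I)
  (V1 : X1 -> nat -> Prop) (V2 : X2 -> nat -> Prop)
  (ZN : X1 -> X2 -> Prop)
  (Z1 : (I -> X1) -> I -> (I -> X2) -> I -> Prop)
  (Z2 : (I -> X2) -> I -> (I -> X1) -> I -> Prop) : Prop :=
  let P1 := is_path N1 NI in
  let P2 := is_path N2 NI in
  (exists x1 x2, ZN x1 x2) /\
  (forall p n q m, Z1 p n q m -> P1 p /\ P2 q) /\
  (forall q m p n, Z2 q m p n -> P2 q /\ P1 p) /\
  nbhd_bisim N1 N2 V1 V2 ZN /\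
  (forall x1 x2 p n, ZN x1 x2 -> P1 p -> p i0 = x1 -> n <> i0 ->
              exists q m, P2 q /\ q i0 = x2 /\ ZN (p n) (q m) /\ Z1 p n q m) /\
  (forall x1 x2 p n, ZN x1 x2 -> P1 p -> p n = x1 -> n <> i0 ->
              exists q m, P2 q /\ q m = x2 /\ ZN (p i0) (q i0) /\ Z1 p n q m) /\
  (forall p n q m kq, Z1 p n q m -> lt le i0 kq -> lt le kq m ->
              exists kp, lt le i0 kp /\ lt le kp n /\ ZN (p kp) (q kq)) /\
  (forall x1 x2 q m, ZN x1 x2 -> P2 q -> q i0 = x2 -> m <> i0 ->
              exists p n, P1 p /\ p i0 = x1 /\ ZN (p n) (q m) /\ Z2 q m p n) /\
  (forall x1 x2 q m, ZN x1 x2 -> P2 q -> q m = x2 -> m <> i0 ->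
              exists p n, P1 p /\ p n = x1 /\ ZN (p i0) (q i0) /\ Z2 q m p n) /\
  (forall q m p n kp, Z2 q m p n -> lt le i0 kp -> lt le kp n ->
              exists kq, lt le i0 kq /\ lt le kq m /\ ZN (p kp) (q kq)).

(* Main.v *)
Require Import Defs.
From Stdlib Require Import Classical.
Lemma classic_dec {A : Type} (a b : A) : a = b \/ a <> b.
Proof. apply classic. Qed.

Lemma const_path {X I : Type} (N : X -> (X -> Prop) -> Prop)
  (NI : I -> (I -> Prop) -> Prop) (le : I -> I -> Prop) (i0 : I) (x : X) :
  nbhd_space N -> index_space NI le i0 -> is_path N NI (fun _ => x).
Proof.
  intros HN HI j M HM. destruct HI as [HNI _].
  destruct (HNI j) as [[Ht [_ [Hup _]]] _].
  apply Hup with (fun _ => True); auto.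
  intros; destruct (HN x) as [_ Hin]; apply Hin; auto.
Qed.

Theorem theorem17 (X1 X2 I : Type)
  (N1 : X1 -> (X1 -> Prop) -> Prop) (N2 : X2 -> (X2 -> Prop) -> Prop)
  (NI : I -> (I -> Prop) -> Prop) (le : I -> I -> Prop) (i0 : I)
  (V1 : X1 -> nat -> Prop) (V2 : X2 -> nat -> Prop)
  (ZN : X1 -> X2 -> Prop)
  (Z1 : (I -> X1) -> I -> (I -> X2) -> I -> Prop)
  (Z2 : (I -> X2) -> I -> (I -> X1) -> I -> Prop) :
  nbhd_space N1 -> nbhd_space N2 -> index_space NI le i0 ->
  path_pres_bisim N1 N2 NI le i0 V1 V2 ZN Z1 Z2 ->
  forall (x1 : X1) (x2 : X2), ZN x1 x2 ->
  forall phi : form,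
    sat N1 NI le i0 V1 phi x1 <-> sat N2 NI le i0 V2 phi x2.
Proof.
  intros HN1 HN2 HI HB x1 x2 Hx phi.
  destruct HB as [_ [_ [_ [HZ [H2 [H3 [H4 [H5 [H6 H7]]]]]]]]].
  pose proof HI as HI'.
  destruct HI' as [_ [_ [Hrefl [Hanti [Htrans [Htot Hmin]]]]]].
  assert (A1 : forall i, lt le i0 i -> le i i0 -> False).
  { intros i [h1 h2] h3. apply h2. apply Hanti; auto. }
  assert (A2 : forall i, le i0 i -> lt le i i0 -> False).
  { intros i h1 [h2 h3]. apply h3. apply Hanti; auto. }
  revert x1 x2 Hx.
  induction phi as [a| |f IH|f IHf g IHg|f IH|f IHf g IHg|f IHf g IHg];
    intros x1 x2 Hx; simpl.
  - destruct (HZ _ _ Hx) as [Ha _]. apply Ha.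
  - tauto.
  - rewrite (IH _ _ Hx). tauto.
  - rewrite (IHf _ _ Hx), (IHg _ _ Hx). tauto.
  - destruct (HZ _ _ Hx) as [_ [Hf Hb]]. split.
    + intros Hc M2 HM2. destruct (Hf M2 HM2) as [M1 [HM1 Hm]].
      destruct (Hc M1 HM1) as [y1 [Hs Hy]].
      destruct (Hm y1 Hy) as [y2 [Hy2 Hz]].
      exists y2. split; auto. apply (IH _ _ Hz); auto.
    + intros Hc M1 HM1. destruct (Hb M1 HM1) as [M2 [HM2 Hm]].
      destruct (Hc M2 HM2) as [y2 [Hs Hy]].
      destruct (Hm y2 Hy) as [y1 [Hy1 Hz]].
      exists y1. split; auto. apply (IH _ _ Hz); auto.
  - split.
    + intros [p [n [Hp [Hpn [Hg Hf]]]]].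
      destruct (classic_dec n i0) as [e|ne].
      * subst n. exists (fun _ => x2), i0. split; [eapply const_path; eauto|].
        split; auto. split.
        -- apply (IHg x1 x2 Hx). rewrite <- Hpn. auto.
        -- intros i h1 h2. exfalso; eauto.
      * destruct (H3 _ _ p n Hx Hp Hpn ne) as [q [m [Hq [Hqm [Hz Hz1]]]]].
        exists q, m. split; auto. split; auto. split.
        -- apply (IHg _ _ Hz); auto.
        -- intros i h1 h2. destruct (classic_dec i m) as [e|ne'].
           ++ subst i. rewrite Hqm. apply (IHf _ _ Hx). rewrite <- Hpn.
              apply Hf; auto. split; auto.
           ++ destruct (H4 _ _ _ _ i Hz1 h1 (conj h2 ne')) as [kp [k1 [k2 Hk]]].
              apply (IHf _ _ Hk). apply Hf; auto. apply k2.
    + intros [q [m [Hq [Hqm [Hg Hf]]]]].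
      destruct (classic_dec m i0) as [e|ne].
      * subst m. exists (fun _ => x1), i0. split; [eapply const_path; eauto|].
        split; auto. split.
        -- apply (IHg x1 x2 Hx). rewrite <- Hqm. auto.
        -- intros i h1 h2. exfalso; eauto.
      * destruct (H6 _ _ q m Hx Hq Hqm ne) as [p [n [Hp [Hpn [Hz Hz2]]]]].
        exists p, n. split; auto. split; auto. split.
        -- apply (IHg _ _ Hz); auto.
        -- intros i h1 h2. destruct (classic_dec i n) as [e|ne'].
           ++ subst i. rewrite Hpn. apply (IHf _ _ Hx). rewrite <- Hqm.
              apply Hf; auto. split; auto.
           ++ destruct (H7 _ _ _ _ i Hz2 h1 (conj h2 ne')) as [kq [k1 [k2 Hk]]].
              apply (IHf _ _ Hk). apply Hf; auto. apply k2.
  - split.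
    + intros [p [n [Hp [Hp0 [Hg Hf]]]]].
      destruct (classic_dec n i0) as [e|ne].
      * subst n. exists (fun _ => x2), i0. split; [eapply const_path; eauto|].
        split; auto. split.
        -- apply (IHg x1 x2 Hx). rewrite <- Hp0. auto.
        -- intros i h1 h2. exfalso; eauto.
      * destruct (H2 _ _ p n Hx Hp Hp0 ne) as [q [m [Hq [Hq0 [Hz Hz1]]]]].
        exists q, m. split; auto. split; auto. split.
        -- apply (IHg _ _ Hz); auto.
        -- intros i h1 h2. destruct (classic_dec i i0) as [e|ne'].
           ++ subst i. rewrite Hq0. apply (IHf _ _ Hx). rewrite <- Hp0.
              apply Hf; auto. split; auto.
           ++ assert (h1' : lt le i0 i) by (split; auto).
              destruct (H4 _ _ _ _ i Hz1 h1' h2) as [kp [k1 [k2 Hk]]].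
              apply (IHf _ _ Hk). apply Hf; [apply k1|exact k2].
    + intros [q [m [Hq [Hq0 [Hg Hf]]]]].
      destruct (classic_dec m i0) as [e|ne].
      * subst m. exists (fun _ => x1), i0. split; [eapply const_path; eauto|].
        split; auto. split.
        -- apply (IHg x1 x2 Hx). rewrite <- Hq0. auto.
        -- intros i h1 h2. exfalso; eauto.
      * destruct (H5 _ _ q m Hx Hq Hq0 ne) as [p [n [Hp [Hp0 [Hz Hz2]]]]].
        exists p, n. split; auto. split; auto. split.
        -- apply (IHg _ _ Hz); auto.
        -- intros i h1 h2. destruct (classic_dec i i0) as [e|ne'].
           ++ subst i. rewrite Hp0. apply (IHf _ _ Hx). rewrite <- Hq0.
              apply Hf; auto. split; auto.
           ++ assert (h1' : lt le i0 i) by (split; auto).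
              destruct (H7 _ _ _ _ i Hz2 h1' h2) as [kq [k1 [k2 Hk]]].
              apply (IHf _ _ Hk). apply Hf; [apply k1|exact k2].
Qed.
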